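(* Let $X=(X_1,\dots,X_p)$ be a jointly continuous random vector in $\mathbb{R}^p$, and let $a_1,\dots,a_{\mathcal{R}}\in\mathbb{C}$ be such that the set $\mathcal{S}'=\{|a_k|^2:k\in[\mathcal{R}]\}\cup\{a_k^Ha_\ell+a_ka_\ell^H:1\le k<\ell\le\mathcal{R}\}$ is rationally independent. Let $\mathcal{L}=\mathcal{S}_1\cup\mathcal{S}_2\cup\mathcal{S}_3$ (viewed as a family of reals), where $\mathcal{S}_1=\{X_i^2|a_k|^2:i\in[p],k\in[\mathcal{R}]\}$, $\mathcal{S}_2=\{X_iX_j|a_k|^2:1\le i<j\le p,k\in[\mathcal{R}]\}$, $\mathcal{S}_3=\{X_iX_j(a_k^Ha_\ell+a_ka_\ell^H):1\le i<j\le p,1\le k<\ell\le\mathcal{R}\}$. Then $\mathbb{P}(\mathcal{L}\text{ is rationally independent})=1$, where the probability is over the joint distribution of $X_1,\dots,X_p$.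
   Context: $x^H$ denotes the complex conjugate of $x\in\mathbb{C}$, so $a_k^Ha_\ell+a_ka_\ell^H\in\mathbb{R}$. A random vector in $\mathbb{R}^p$ is jointly continuous if it has a joint density with respect to Lebesgue measure. A finite family of reals $(x_k)$ is rationally independent if $\sum_kq_kx_k=0$ with $q_k\in\mathbb{Q}$ implies all $q_k=0$. *)

(* Defs.v *)
From HB Require Import structures.
From mathcomp Require Import all_boot all_order all_algebra.
From mathcomp Require Import all_classical all_reals all_analysis.
From mathcomp Require Import measurable_realfun complex.

Set Implicit Arguments.
Unset Strict Implicit.
Unset Printing Implicit Defensive.

Import Order.TTheory GRing.Theory Num.Theory.
Local Open Scope classical_set_scope.
Local Open Scope ring_scope.

Definition rat_indep (R : realType) (I : finType) (P : pred I) (x : I -> R) :=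
  forall q : I -> rat,
    \sum_(i | P i) ratr (q i) * x i = 0 -> forall i, P i -> q i = 0.

Fixpoint iter_leb_int (R : realType) (n : nat) :
    (n.-tuple R -> \bar R) -> \bar R :=
  match n with
  | 0 => fun g => g [tuple]
  | m.+1 => fun g =>
      (\int[@lebesgue_measure R]_(x in [set: R])
         iter_leb_int (fun t : m.-tuple R => g [tuple of x :: t]))%E
  end.

Definition jointly_continuous (R : realType) (d : measure_display)
    (T : measurableType d) (P : probability T R) (p : nat)
    (X : T -> p.-tuple R) :=
  measurable_fun [set: T] X /\
  exists f : p.-tuple R -> \bar R,
    measurable_fun [set: p.-tuple R] f /\ (forall t, (0 <= f t)%E) /\
    forall B : set (p.-tuple R), measurable B ->
      P (X @^-1` B) = iter_leb_int (fun t => ((\1_B t)%:E * f t)%E).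

Definition csq (R : realType) (a : R[i]) : R := complex.Re (a * a^*)%C.
Definition cmix (R : realType) (a b : R[i]) : R :=
  complex.Re ((a^*)%C * b + a * (b^*)%C).

Definition Sprime_idx (r : nat) (s : 'I_r + ('I_r * 'I_r)) : bool :=
  match s with inl _ => true | inr kl => (kl.1 < kl.2)%N end.
Definition Sprime (R : realType) (r : nat) (a : 'I_r -> R[i])
    (s : 'I_r + ('I_r * 'I_r)) : R :=
  match s with inl k => csq (a k) | inr kl => cmix (a kl.1) (a kl.2) end.

Definition L_index (p r : nat) :=
  (('I_p * 'I_r) + (('I_p * 'I_p * 'I_r) + ('I_p * 'I_p * ('I_r * 'I_r))))%type.
Definition L_idx (p r : nat) (s : L_index p r) : bool :=
  match s with
  | inl _ => true
  | inr (inl (i, j, _)) => (i < j)%N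
  | inr (inr (i, j, (k, l))) => (i < j)%N && (k < l)%N
  end.
Definition L_fam (R : realType) (p r : nat) (a : 'I_r -> R[i])
    (x : p.-tuple R) (s : L_index p r) : R :=
  match s with
  | inl (i, k) => tnth x i ^+ 2 * csq (a k)
  | inr (inl (i, j, k)) => tnth x i * tnth x j * csq (a k)
  | inr (inr (i, j, (k, l))) => tnth x i * tnth x j * cmix (a k) (a l)
  end.

(* Main.v *)
Require Import Defs.
From HB Require Import structures.
From mathcomp Require Import all_boot all_order all_algebra.
From mathcomp Require Import all_classical all_reals all_analysis.
From mathcomp Require Import measurable_realfun complex.

Set Implicit Arguments.
Unset Strict Implicit.
Import Order.TTheory GRing.Theory Num.Theory.
Local Open Scope classical_set_scope.
Local Open Scope ring_scope.

Section S.
Variable R : realType.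

Lemma roots_finite (p : {poly R}) : p != 0 -> finite_set [set x | p.[x] = 0].
Proof.
move: {2}(size p) (leqnn (size p)) => n; elim: n p => [|n IH] p.
  by rewrite leqn0 size_poly_eq0 => /eqP ->; rewrite eqxx.
move=> Hs p0.
have [[x0 Hx0]|nr] := pselect (exists x, p.[x] = 0); last first.
  rewrite (_ : [set x | _] = set0) //; apply/seteqP; split => x //= Hx.
  by apply: nr; exists x.
have /factor_theorem [q Hq] : root p x0 by apply/eqP.
have q0 : q != 0 by apply: contraNneq p0 => q0; rewrite Hq q0 mul0r.
have Hsq : (size q <= n)%N.
  move: Hs; rewrite Hq size_mul ?polyXsubC_eq0 // size_XsubC addn2 /=.
  by [].
apply: (sub_finite_set (B := [set x0] `|` [set x | q.[x] = 0])).
  move=> x /=; rewrite Hq hornerM hornerXsubC => /eqP; rewrite mulf_eq0.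
  case/orP => /eqP H; [by right | by left; apply/eqP; rewrite -subr_eq0 H].
by rewrite finite_setU; split; [exact: finite_set1 | exact: IH].
Qed.

Local Open Scope ereal_scope.

Lemma int_null (h : R -> \bar R) (F : set R) : finite_set F ->
  (forall x, 0 <= h x) -> (forall x, ~ F x -> h x = 0) ->
  \int[@lebesgue_measure R]_(x in [set: R]) h x = 0.
Proof.
move=> fF h0 hF.
have mF : measurable F.
  apply: countable_measurable; last exact: finite_set_countable.
  by move=> t; exact: measurable_set1.
have mh : measurable_fun [set: R] h.
  move=> _ B mB; rewrite setTI.
  rewrite (_ : h @^-1` B = (h @^-1` B `&` F) `|` (h @^-1` B `&` ~` F)); last first.
    by rewrite -setIUr setUCr setIT.
  apply: measurableU.
    apply: countable_measurable; first by move=> t; exact: measurable_set1.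
    by apply: finite_set_countable; apply: sub_finite_set fF; apply: subIsetr.
  have [B0|B0] := pselect (B 0).
    rewrite (_ : _ `&` _ = ~` F); first exact: measurableC.
    by apply/seteqP; split => x /=; [case|move=> Fx; split => //; rewrite hF].
  rewrite (_ : _ `&` _ = set0) //.
  by apply/seteqP; split => x //= [Bx Fx]; apply: B0; rewrite -(hF _ Fx).
rewrite (@ge0_negligible_integral _ _ _ (@lebesgue_measure R) setT F h mF measurableT mh) //.
  by apply: integral0_eq => x [_ /hF].
exact: countable_lebesgue_measure0 (finite_set_countable fF).
Qed.

Lemma iter_ge0 n (g : n.-tuple R -> \bar R) : (forall t, 0 <= g t) ->
  0 <= iter_leb_int g.
Proof.
elim: n g => [|n IH] g g0 /=; first exact: g0.
by apply: integral_ge0 => x _; apply: IH.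
Qed.

Local Close Scope ereal_scope.

Fixpoint Pol (n : nat) : (n.-tuple R -> R) -> Prop :=
  match n with
  | 0 => fun _ => True
  | m.+1 => fun f : m.+1.-tuple R -> R =>
      (forall x, Pol (fun t : m.-tuple R => f [tuple of x :: t])) /\
      (forall t : m.-tuple R, exists p : {poly R}, forall x, f [tuple of x :: t] = p.[x])
  end.
Arguments Pol {n}.

Lemma Pol_ext n f g : Pol f -> (forall t, f t = g t) -> @Pol n g.
Proof.
elim: n f g => [//|n IH] f g /= [H1 H2] fg; split.
  by move=> x; apply: IH (H1 x) _ => t; rewrite fg.
by move=> t; have [q Hq] := H2 t; exists q => x; rewrite -fg.
Qed.

Lemma Pol_cst n c : @Pol n (fun _ => c).
Proof.
elim: n => [//|n IH] /=; split => // t; exists c%:P => x; by rewrite hornerC.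
Qed.

Lemma Pol_add n f g : Pol f -> Pol g -> @Pol n (fun t => f t + g t).
Proof.
elim: n f g => [//|n IH] f g /= [F1 F2] [G1 G2]; split => [x|t]; first exact: IH.
have [p Hp] := F2 t; have [q Hq] := G2 t.
by exists (p + q) => x; rewrite hornerD Hp Hq.
Qed.

Lemma Pol_mul n f g : Pol f -> Pol g -> @Pol n (fun t => f t * g t).
Proof.
elim: n f g => [//|n IH] f g /= [F1 F2] [G1 G2]; split => [x|t]; first exact: IH.
have [p Hp] := F2 t; have [q Hq] := G2 t.
by exists (p * q) => x; rewrite hornerM Hp Hq.
Qed.

Lemma Pol_nth n i : @Pol n (fun t => nth 0 t i).
Proof.
elim: n i => [//|n IH] i /=; split.
  move=> x; case: i => [|i] /=; first exact: Pol_cst.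
  exact: IH.
move=> t; case: i => [|i] /=.
  by exists 'X => x; rewrite hornerX.
by exists (nth 0 t i)%:P => x; rewrite hornerC.
Qed.

Lemma Pol_sum n (I : finType) (P : pred I) (F : I -> n.-tuple R -> R) :
  (forall i, P i -> Pol (F i)) -> Pol (fun t => \sum_(i | P i) F i t).
Proof.
move=> HF.
suff H : forall s, Pol (fun t => \sum_(i <- s | P i) F i t) by apply: H.
elim => [|i s IH].
  apply: (Pol_ext (Pol_cst n 0)).
  by move=> t; rewrite big_nil.
case Pi: (P i).
  by apply: (Pol_ext (Pol_add (HF _ Pi) IH)) => t; rewrite big_cons Pi.
by apply: (Pol_ext IH) => t; rewrite big_cons Pi.
Qed.

Local Open Scope ereal_scope.

Lemma iter_null n (f : n.-tuple R -> R) (g : n.-tuple R -> \bar R) :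
  Pol f -> (exists t, f t != 0%R) -> (forall t, 0 <= g t) ->
  (forall t, f t != 0%R -> g t = 0) -> iter_leb_int g = 0.
Proof.
elim: n f g => [|n IH] f g.
  by move=> _ [t ft] _ gf /=; rewrite -(tuple0 t); apply: gf.
move=> /= [H1 H2] [t0 ft0] g0 gf.
have [p Hp] := H2 [tuple of behead t0].
have px0 : p.[thead t0] != 0%R by rewrite -Hp -tuple_eta.
have p0 : p != 0%R by apply: contraNneq px0 => ->; rewrite horner0.
apply: (@int_null _ [set x | p.[x] = 0%R]); first exact: roots_finite.
  by move=> x; apply: iter_ge0.
move=> x /eqP px; apply: (IH _ _ (H1 x)) => //.
  by exists [tuple of behead t0]; rewrite Hp.
by move=> t; apply: gf.
Qed.


Lemma iter_null0 n (g : n.-tuple R -> \bar R) : iter_leb_int (fun t => ((\1_(@set0 (n.-tuple R)) t)%:E * g t)%E) = 0%E.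
Proof.
elim: n g => [|n IH] g /=; first by rewrite indicE in_set0 mul0e.
rewrite (_ : (fun x => _) = fun _ => 0%E); first by rewrite integral0.
apply: funext => x; rewrite -(IH (fun t => g [tuple of x :: t])).
by congr iter_leb_int; apply: funext => t; rewrite !indicE !in_set0.
Qed.

Local Close Scope ereal_scope.

Lemma sum_inj (I J : finType) (phi : J -> I) (F : I -> R) (G : J -> R) :
  injective phi -> (forall s, (forall j, s <> phi j) -> F s = 0) ->
  (forall j, F (phi j) = G j) -> \sum_s F s = \sum_j G j.
Proof.
move=> inj F0 FG.
rewrite (bigID (mem (phi @: setT))) /= [X in _ + X]big1 ?addr0; last first.
  move=> s Hs; apply: F0 => j sj; move: Hs; rewrite sj.
  by rewrite imset_f ?inE.
rewrite big_imset /=; last by move=> x y _ _; apply: inj.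
by apply: eq_big => [j|j _]; [by rewrite ?in_setT | rewrite FG].
Qed.

Lemma b2R0 : (false%:R : R) = 0. Proof. by []. Qed.
Lemma b2R1 : (true%:R : R) = 1. Proof. by []. Qed.

Variables (p r : nat) (a : 'I_r -> R[i]).

Definition Qf (q : L_index p r -> rat) (x : p.-tuple R) :=
  \sum_(s | L_idx s) ratr (q s) * L_fam a x s.

Definition e1 (i : 'I_p) : p.-tuple R := [tuple (j == i)%:R | j < p].
Definition e2 (i j : 'I_p) : p.-tuple R := [tuple ((m == i) || (m == j))%:R | m < p].

Lemma ord_pair (i j i' j' : 'I_p) : (i < j)%N -> (i' < j')%N ->
  ((i' == i) || (i' == j)) && ((j' == i) || (j' == j)) -> (i' == i) && (j' == j).
Proof.
move=> ij ij'; case/andP => /orP[] /eqP e1 /orP[] /eqP e2; subst; rewrite ?eqxx //.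
- by rewrite ltnn in ij'.
- by move: (ltn_trans ij ij'); rewrite ltnn.
- by rewrite ltnn in ij'.
Qed.

Lemma nontriv (q : L_index p r -> rat) :
  rat_indep (@Sprime_idx r) (Sprime a) ->
  (forall x, Qf q x = 0) -> forall s, L_idx s -> q s = 0.
Proof.
move=> Hind HQ.
have H1 : forall i k, q (inl (i, k)) = 0.
  move=> i.
  pose q' := fun j : 'I_r + ('I_r * 'I_r) =>
    match j with inl k => q (inl (i, k)) | inr _ => 0 end.
  pose phi := fun j : 'I_r + ('I_r * 'I_r) =>
    match j with inl k => inl (i, k) | inr kl => inr (inr (i, i, kl)) end
    : L_index p r.
  have : \sum_(j | Sprime_idx j) ratr (q' j) * Sprime a j = 0.
    apply: etrans _ (HQ (e1 i)); rewrite /Qf big_mkcond [in RHS]big_mkcond /=.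
    symmetry; apply: (@sum_inj _ _ phi).
    - by move=> [k|kl] [k'|kl'] //= [] -> //.
    - move=> [[i' k]|[[[i' j'] k]|[[i' j'] [k l]]]] /= Hs; rewrite /e1 !tnth_mktuple.
      + have [ii|ii] := eqVneq i' i; last by rewrite b2R0 expr0n mul0r mulr0.
        by exfalso; apply: (Hs (inl k)); rewrite ii.
      + case: ifP => // ij'; case: (eqVneq i' i) => [ii|_]; last by rewrite b2R0 !mul0r mulr0.
        case: (eqVneq j' i) => [jj|_]; last by rewrite b2R0 mulr0 mul0r mulr0.
        by move: ij'; rewrite ii jj ltnn.
      + case: ifP => // /andP[ij' _]; case: (eqVneq i' i) => [ii|_]; last by rewrite b2R0 !mul0r mulr0.
        case: (eqVneq j' i) => [jj|_]; last by rewrite b2R0 mulr0 mul0r mulr0.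
        by move: ij'; rewrite ii jj ltnn.
    - move=> [k|[k l]] /=; rewrite ?ltnn //=.
        by rewrite /e1 tnth_mktuple eqxx expr1n mul1r.
      by case: ifP => //; rewrite rmorph0 mul0r.
  move/Hind => Hq k; exact: (Hq (inl k)).
have H2 : forall (i j : 'I_p), (i < j)%N ->
    (forall k, q (inr (inl (i, j, k))) = 0) /\
    (forall k l : 'I_r, (k < l)%N -> q (inr (inr (i, j, (k, l)))) = 0).
  move=> i j ij.
  pose q' := fun s : 'I_r + ('I_r * 'I_r) =>
    match s with inl k => q (inr (inl (i, j, k))) | inr kl => q (inr (inr (i, j, kl))) end.
  pose phi := fun s : 'I_r + ('I_r * 'I_r) =>
    match s with inl k => inr (inl (i, j, k)) | inr kl => inr (inr (i, j, kl)) end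
    : L_index p r.
  have : \sum_(s | Sprime_idx s) ratr (q' s) * Sprime a s = 0.
    apply: etrans _ (HQ (e2 i j)); rewrite /Qf big_mkcond [in RHS]big_mkcond /=.
    symmetry; apply: (@sum_inj _ _ phi).
    - by move=> [k|kl] [k'|kl'] //= [] -> //.
    - move=> [[i' k]|[[[i' j'] k]|[[i' j'] [k l]]]] /= Hs; rewrite /e2 !tnth_mktuple.
      + by rewrite H1 rmorph0 mul0r.
      + case: ifP => // ij'.
        have [/andP[/eqP e /eqP f]|nf] := boolP ((i' == i) && (j' == j)).
          by exfalso; apply: (Hs (inl k)); rewrite e f.
        case: (boolP ((i' == i) || (i' == j))) => [a1|_]; last by rewrite b2R0 !mul0r mulr0.
        case: (boolP ((j' == i) || (j' == j))) => [a2|_]; last by rewrite b2R0 mulr0 mul0r mulr0.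
        by move: nf; rewrite ord_pair // a1 a2.
      + case: ifP => // /andP[ij' _].
        have [/andP[/eqP e /eqP f]|nf] := boolP ((i' == i) && (j' == j)).
          by exfalso; apply: (Hs (inr (k, l))); rewrite e f.
        case: (boolP ((i' == i) || (i' == j))) => [a1|_]; last by rewrite b2R0 !mul0r mulr0.
        case: (boolP ((j' == i) || (j' == j))) => [a2|_]; last by rewrite b2R0 mulr0 mul0r mulr0.
        by move: nf; rewrite ord_pair // a1 a2.
    - move=> [k|[k l]] /=; rewrite ij /= /e2 !tnth_mktuple !eqxx /= ?orbT !mul1r //.
  move/Hind => Hq; split => [k|k l kl]; first exact: (Hq (inl k)).
  exact: (Hq (inr (k, l))).
move=> [[i k]|[[[i j] k]|[[i j] [k l]]]] //= Hs.
- by have [] := H2 _ _ Hs.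
- by case/andP: Hs => ij kl; have [_ ->] := H2 _ _ ij.
Qed.


Lemma Pol_Q (q : L_index p r -> rat) : Pol (Qf q).
Proof.
apply: Pol_sum => s _; apply: Pol_mul; first exact: Pol_cst.
case: s => [[i k]|[[[i j] k]|[[i j] [k l]]]] /=.
- apply: (Pol_ext (Pol_mul (Pol_mul (Pol_nth _ i) (Pol_nth _ i)) (Pol_cst _ (csq (a k))))).
  by move=> t; rewrite expr2 (tnth_nth 0).
- apply: (Pol_ext (Pol_mul (Pol_mul (Pol_nth _ i) (Pol_nth _ j)) (Pol_cst _ (csq (a k))))).
  by move=> t; rewrite !(tnth_nth 0).
- apply: (Pol_ext (Pol_mul (Pol_mul (Pol_nth _ i) (Pol_nth _ j)) (Pol_cst _ (cmix (a k) (a l))))).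
  by move=> t; rewrite !(tnth_nth 0).
Qed.

Lemma mQ (q : L_index p r -> rat) : measurable_fun [set: p.-tuple R] (Qf q).
Proof.
rewrite /Qf.
suff H : forall s0, measurable_fun [set: p.-tuple R]
   (fun x => \sum_(s <- s0 | L_idx s) ratr (q s) * L_fam a x s) by apply: H.
elim => [|s s0 IH].
  by under eq_fun do rewrite big_nil; exact: measurable_cst.
under eq_fun do rewrite big_cons.
case: (L_idx s); last exact: IH.
apply: measurable_funD => //; apply: measurable_funM; first exact: measurable_cst.
case: s => [[i k]|[[[i j] k]|[[i j] [k l]]]] /=;
  (apply: measurable_funM; last exact: measurable_cst).
- under eq_fun do rewrite expr2.
  by apply: measurable_funM; exact: measurable_tnth.
- by apply: measurable_funM; exact: measurable_tnth.
- by apply: measurable_funM; exact: measurable_tnth.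
Qed.
End S.

Theorem lemma6 (R : realType) (d : measure_display) (T : measurableType d)
    (P : probability T R) (p r : nat) (X : T -> p.-tuple R)
    (a : 'I_r -> R[i]) :
  jointly_continuous P X ->
  rat_indep (@Sprime_idx r) (Sprime a) ->
  let E := [set w : T | rat_indep (@L_idx p r) (L_fam a (X w))] in
  measurable E /\ P E = 1%E.
Proof.
move=> [mX [f [mf [f0 Hf]]]] Hind E.
pose nt (u : {ffun L_index p r -> rat}) := [exists s, L_idx s && (u s != 0)].
pose Z (u : {ffun L_index p r -> rat}) : set (p.-tuple R) :=
  if nt u then (Qf a (fun s => u s)) @^-1` [set 0] else set0.
have mZ u : measurable (Z u).
  rewrite /Z; case: (nt u) => //.
  by rewrite -[X in measurable X]setTI; apply: mQ => //; exact: measurable_set1.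
pose B n := if @unpickle {ffun L_index p r -> rat} n is Some u then X @^-1` Z u else set0.
have mB n : measurable (B n).
  rewrite /B; case: unpickle => // u.
  by rewrite -[X in measurable X]setTI; apply: mX.
have PB n : P (B n) = 0%E.
  rewrite /B; case: unpickle => [u|]; last exact: measure0.
  rewrite Hf //; rewrite /Z; case ntu: (nt u); last first.
    by apply: iter_null0.
  apply: (@iter_null _ _ (Qf a (fun s => u s))); first exact: Pol_Q.
  - apply: contrapT => Hn.
    have H0 : forall x, Qf a (fun s => u s) x = 0.
      by move=> x; apply: contrapT => Hx; apply: Hn; exists x; apply/eqP.
    have := nontriv Hind H0.
    move/existsP: ntu => [s /andP[Ls us]] => /(_ s Ls) /eqP.
    by rewrite (negbTE us).
  - move=> t; apply: mule_ge0 => //; rewrite lee_fin; exact: indic_ge0.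
  - move=> t Qt; rewrite indicE (_ : (t \in _) = false) ?mul0e //.
    by apply/negbTE/negP; rewrite inE /= => /eqP; apply/negP.
have PBU : P (\bigcup_n B n) = 0%E.
  have HH := (@negligibleP _ _ _ P _ (bigcupT_measurable _ mB)).
  apply/HH.
  apply: negligible_bigcup => n; exact: (proj2 (@negligibleP _ _ _ P _ (mB n)) (PB n)).
have EB : E = ~` \bigcup_n B n.
  apply/seteqP; split => w.
    move=> Ew [n _]; rewrite /B; case Hn: unpickle => [u|] //.
    rewrite /Z /=; case ntu: (nt u) => //= Qw.
    have := Ew (fun s => u s) Qw.
    move/existsP: ntu => [s /andP[Ls us]] => /(_ s Ls) /eqP.
    by rewrite (negbTE us).
  move=> nB q Hq s Ls; apply: contrapT => qs0; apply: nB.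
  exists (pickle (finfun q)) => //; rewrite /B pickleK /Z.
  have -> : nt (finfun q) = true.
    by apply/existsP; exists s; rewrite ffunE Ls; apply/eqP.
  rewrite /= /Qf; under eq_bigr do rewrite ffunE; exact: Hq.
split; first by rewrite EB; apply: measurableC; exact: bigcupT_measurable.
by rewrite EB probability_setC ?PBU ?sube0 //; exact: bigcupT_measurable.
Qed.
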